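(* Under the standing assumptions below, let $\pi\in\Pi$, let $\delta>0$, and let $\tilde\pi$ be an optimal solution of the trust-region subproblem $$\max_{\pi'\in\Pi} L_{\pi}(\pi')\quad\text{s.t.}\quad \sum_{s}\rho_{\pi}(s)\,D_{TV}(\pi(\cdot|s)\,\|\,\pi'(\cdot|s))\le\delta.$$ Then $$L_{\pi}(\tilde\pi)-L_{\pi}(\pi)\ \ge\ \min\bigl(1,(1-\gamma)\delta\bigr)\,\mathbb A^*_{\pi}.$$
   Context: Consider an infinite-horizon discounted Markov decision process $(\mathcal S,\mathcal A,P,r,\rho_0,\gamma)$ with finite state space $\mathcal S$, finite action space $\mathcal A$, transition probabilities $P(s'|s,a)$, bounded reward function $r:\mathcal S\times\mathcal A\to\mathbb R$, initial-state distribution $\rho_0$ with $\rho_0(s)>0$ for all $s\in\mathcal S$, and discount factor $\gamma\in(0,1)$. A policy $\pi$ assigns to each state $s$ a probability distribution $\pi(\cdot|s)$ on $\mathcal A$; $\Pi$ denotes the set of all policies. The total expected reward is $\eta(\pi)=\mathbb E_\pi[\sum_{t=0}^\infty\gamma^t r(s_t,a_t)]$, where $s_0\sim\rho_0$, $a_t\sim\pi(\cdot|s_t)$, $s_{t+1}\sim P(\cdot|s_t,a_t)$. The unnormalized discounted visitation frequency is $\rho_\pi(s)=\sum_{t=0}^\infty\gamma^t\mathbb P(s_t=s\mid\pi)$. $Q_\pi(s,a)=\mathbb E_\pi[\sum_{l\ge0}\gamma^l r(s_l,a_l)\mid s_0=s,a_0=a]$, $V_\pi(s)=\mathbb E_\pi[\sum_{l\ge0}\gamma^l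 r(s_l,a_l)\mid s_0=s]$, and the advantage is $A_\pi(s,a)=Q_\pi(s,a)-V_\pi(s)$. The surrogate function is $L_\pi(\tilde\pi)=\eta(\pi)+\sum_s\rho_\pi(s)\sum_a\tilde\pi(a|s)A_\pi(s,a)$. The policy advantage of $\pi'$ with respect to $\pi$ is $\mathbb A_\pi(\pi')=\sum_s\rho_\pi(s)\sum_a\pi'(a|s)A_\pi(s,a)$, and $\mathbb A^*_\pi=\max_{\pi'\in\Pi}\mathbb A_\pi(\pi')$. The total variation distance is $D_{TV}(p\|q)=\frac12\sum_x|p(x)-q(x)|$. *)

(* Defs.v *)
From Stdlib Require Import Reals Lra.
Open Scope R_scope.

(* States are 0..nS-1, actions are 0..nA-1 (finite spaces).
   MDP data: P s a s' = P(s'|s,a), r s a, rho0 s; a policy pi s a = pi(a|s). *)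

Fixpoint fsum (n : nat) (f : nat -> R) : R :=
  match n with
  | O => 0
  | S m => fsum m f + f m
  end.

Definition is_mdp (nS nA : nat) (P : nat -> nat -> nat -> R)
  (rho0 : nat -> R) : Prop :=
  (0 < nS)%nat /\ (0 < nA)%nat /\
  (forall s a s', (s < nS)%nat -> (a < nA)%nat -> (s' < nS)%nat -> 0 <= P s a s') /\
  (forall s a, (s < nS)%nat -> (a < nA)%nat -> fsum nS (fun s' => P s a s') = 1) /\
  (forall s, (s < nS)%nat -> 0 < rho0 s) /\
  fsum nS rho0 = 1.

Definition is_policy (nS nA : nat) (pi : nat -> nat -> R) : Prop :=
  (forall s a, (s < nS)%nat -> (a < nA)%nat -> 0 <= pi s a) /\
  (forall s, (s < nS)%nat -> fsum nA (fun a => pi s a) = 1).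

(* Joint law of (s_t, a_t) under policy pi, started from the state-action
   law mu of (s_0, a_0):  sa_law t s a = P(s_t = s, a_t = a). *)
Fixpoint sa_law (nS nA : nat) (P : nat -> nat -> nat -> R) (pi : nat -> nat -> R)
  (mu : nat -> nat -> R) (t : nat) : nat -> nat -> R :=
  match t with
  | O => mu
  | S t' => fun s a =>
      fsum nS (fun s0 => fsum nA (fun a0 =>
        sa_law nS nA P pi mu t' s0 a0 * P s0 a0 s)) * pi s a
  end.

Definition exp_reward (nS nA : nat) (P : nat -> nat -> nat -> R) (r : nat -> nat -> R)
  (pi : nat -> nat -> R) (mu : nat -> nat -> R) (t : nat) : R :=
  fsum nS (fun s => fsum nA (fun a => sa_law nS nA P pi mu t s a * r s a)).

Definition is_disc_return (nS nA : nat) (P : nat -> nat -> nat -> R) (r : nat -> nat -> R)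
  (gamma : R) (pi : nat -> nat -> R) (mu : nat -> nat -> R) (v : R) : Prop :=
  infinite_sum (fun t => gamma ^ t * exp_reward nS nA P r pi mu t) v.

Definition mu_start (rho0 : nat -> R) (pi : nat -> nat -> R) : nat -> nat -> R :=
  fun s a => rho0 s * pi s a.
Definition mu_state (s0 : nat) (pi : nat -> nat -> R) : nat -> nat -> R :=
  fun s a => if Nat.eqb s s0 then pi s a else 0.
Definition mu_sa (s0 a0 : nat) : nat -> nat -> R :=
  fun s a => if andb (Nat.eqb s s0) (Nat.eqb a a0) then 1 else 0.

Definition is_eta nS nA P r rho0 gamma pi (v : R) : Prop :=
  is_disc_return nS nA P r gamma pi (mu_start rho0 pi) v.

Definition is_V nS nA P r gamma pi (V : nat -> R) : Prop :=
  forall s, (s < nS)%nat -> is_disc_return nS nA P r gamma pi (mu_state s pi) (V s).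

Definition is_Q nS nA P r gamma pi (Q : nat -> nat -> R) : Prop :=
  forall s a, (s < nS)%nat -> (a < nA)%nat ->
    is_disc_return nS nA P r gamma pi (mu_sa s a) (Q s a).

(* unnormalized discounted visitation frequency rho_pi(s) = sum_t gamma^t P(s_t=s) *)
Definition is_visitation nS nA P rho0 gamma pi (rho : nat -> R) : Prop :=
  forall s, (s < nS)%nat ->
    infinite_sum (fun t => gamma ^ t *
       fsum nA (fun a => sa_law nS nA P pi (mu_start rho0 pi) t s a)) (rho s).

Definition pol_adv nS nA (rho : nat -> R) (A : nat -> nat -> R) (pi' : nat -> nat -> R) : R :=
  fsum nS (fun s => rho s * fsum nA (fun a => pi' s a * A s a)).

Definition surrogate nS nA (eta : R) (rho : nat -> R) (A : nat -> nat -> R)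
  (pi' : nat -> nat -> R) : R :=
  eta + fsum nS (fun s => rho s * fsum nA (fun a => pi' s a * A s a)).

Definition dtv nA (pi pi' : nat -> nat -> R) (s : nat) : R :=
  / 2 * fsum nA (fun a => Rabs (pi s a - pi' s a)).

Definition exp_dtv nS nA (rho : nat -> R) (pi pi' : nat -> nat -> R) : R :=
  fsum nS (fun s => rho s * dtv nA pi pi' s).

(* Main.v *)
Require Import Defs.
From Stdlib Require Import Reals Lra Lia FunctionalExtensionality.
Open Scope R_scope.

Lemma fsum_ext n f g : (forall i, (i < n)%nat -> f i = g i) -> fsum n f = fsum n g.
Proof. induction n; intros H; simpl; auto. rewrite IHn by (intros; apply H; lia). rewrite H by lia. reflexivity. Qed.

Lemma fsum_zero n : fsum n (fun _ => 0) = 0.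
Proof. induction n; simpl; auto. rewrite IHn; ring. Qed.

Lemma fsum_plus n f g : fsum n (fun i => f i + g i) = fsum n f + fsum n g.
Proof. induction n; simpl. ring. rewrite IHn; ring. Qed.

Lemma fsum_minus n f g : fsum n (fun i => f i - g i) = fsum n f - fsum n g.
Proof. induction n; simpl. ring. rewrite IHn; ring. Qed.

Lemma fsum_scal n c f : fsum n (fun i => c * f i) = c * fsum n f.
Proof. induction n; simpl. ring. rewrite IHn; ring. Qed.

Lemma fsum_scal_r n c f : fsum n (fun i => f i * c) = fsum n f * c.
Proof. induction n; simpl. ring. rewrite IHn; ring. Qed.

Lemma fsum_swap n m f : fsum n (fun i => fsum m (fun j => f i j)) = fsum m (fun j => fsum n (fun i => f i j)).
Proof. induction n; simpl. rewrite fsum_zero; auto. rewrite IHn, fsum_plus; auto. Qed.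

Lemma fsum_le n f g : (forall i, (i < n)%nat -> f i <= g i) -> fsum n f <= fsum n g.
Proof. induction n; intros H; simpl. lra. assert (f n <= g n) by (apply H; lia).
  assert (fsum n f <= fsum n g) by (apply IHn; intros; apply H; lia). lra. Qed.

Lemma fsum_nonneg n f : (forall i, (i < n)%nat -> 0 <= f i) -> 0 <= fsum n f.
Proof. intros H. rewrite <- (fsum_zero n). apply fsum_le; auto. Qed.

Lemma fsum_delta n a f : fsum n (fun b => f b * (if Nat.eqb a b then 1 else 0)) = if Nat.ltb a n then f a else 0.
Proof. induction n; simpl. destruct a; reflexivity. rewrite IHn.
  destruct (Nat.eqb_spec a n); destruct (Nat.ltb_spec a n); destruct (Nat.ltb_spec a (S n)); try lia; subst; ring. Qed.

Lemma infsum_ext a b l : (forall t, a t = b t) -> infinite_sum a l -> infinite_sum b l.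
Proof. intros H. replace b with a; auto. extensionality t; auto. Qed.

Lemma infsum_plus a b la lb : infinite_sum a la -> infinite_sum b lb -> infinite_sum (fun t => a t + b t) (la + lb).
Proof. intros Ha Hb eps He. destruct (Ha (eps/2)) as [N1 H1]. lra. destruct (Hb (eps/2)) as [N2 H2]. lra.
  exists (N1 + N2)%nat. intros n Hn. specialize (H1 n ltac:(lia)). specialize (H2 n ltac:(lia)).
  assert (E: sum_f_R0 (fun t => a t + b t) n = sum_f_R0 a n + sum_f_R0 b n) by (rewrite plus_sum; auto).
  rewrite E. unfold Rdist in *.
  replace (sum_f_R0 a n + sum_f_R0 b n - (la + lb)) with ((sum_f_R0 a n - la) + (sum_f_R0 b n - lb)) by ring.
  eapply Rle_lt_trans. apply Rabs_triang. lra. Qed.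

Lemma sumf_scal c a n : sum_f_R0 (fun t => c * a t) n = c * sum_f_R0 a n.
Proof. induction n; simpl; auto. rewrite IHn. ring. Qed.

Lemma infsum_scal c a l : infinite_sum a l -> infinite_sum (fun t => c * a t) (c * l).
Proof. intros Ha eps He. assert (Hc: 0 < Rabs c + 1) by (pose proof (Rabs_pos c); lra).
  destruct (Ha (eps / (Rabs c + 1))) as [N H1]. apply Rdiv_lt_0_compat; lra.
  exists N. intros n Hn. specialize (H1 n Hn).
  rewrite sumf_scal. unfold Rdist in *.
  replace (c * sum_f_R0 a n - c * l) with (c * (sum_f_R0 a n - l)) by ring.
  rewrite Rabs_mult.
  apply Rle_lt_trans with ((Rabs c + 1) * Rabs (sum_f_R0 a n - l)).
  apply Rmult_le_compat_r. apply Rabs_pos. lra.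
  apply Rmult_lt_reg_l with (/ (Rabs c + 1)). apply Rinv_0_lt_compat; lra.
  rewrite <- Rmult_assoc, Rinv_l by lra. unfold Rdiv in H1. lra. Qed.

Lemma infsum_fsum n f l : (forall b, (b < n)%nat -> infinite_sum (f b) (l b)) ->
  infinite_sum (fun t => fsum n (fun b => f b t)) (fsum n l).
Proof. induction n; intros H; simpl.
  - intros eps He. exists O. intros k _. unfold Rdist.
    replace (sum_f_R0 (fun _ => 0) k) with 0. rewrite Rminus_0_r, Rabs_R0; lra.
    induction k; simpl; auto. rewrite <- IHk; ring.
  - apply infsum_plus. apply IHn. intros; apply H; lia. apply H; lia. Qed.

Lemma infsum_nonneg a l : (forall t, 0 <= a t) -> infinite_sum a l -> 0 <= l.
Proof. intros Hp H. destruct (Rle_lt_dec 0 l); auto.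
  destruct (H (- l)) as [N HN]. lra. specialize (HN N (le_n N)).
  assert (G: forall k, 0 <= sum_f_R0 a k). { induction k; simpl; auto. pose proof (Hp (S k)). lra. }
  pose proof (G N).
  unfold Rdist in HN. rewrite Rabs_right in HN; lra. Qed.

Lemma sa_law_lin nS nA P pi n (c : nat -> R) (m : nat -> nat -> nat -> R) mu :
  (forall s a, (s < nS)%nat -> (a < nA)%nat -> mu s a = fsum n (fun b => c b * m b s a)) ->
  forall t s a, (s < nS)%nat -> (a < nA)%nat ->
  sa_law nS nA P pi mu t s a = fsum n (fun b => c b * sa_law nS nA P pi (m b) t s a).
Proof. intros Hmu t. induction t; intros s a Hs Ha; simpl. auto.
  rewrite (fsum_ext nS _ (fun s0 => fsum n (fun b => c b *
      fsum nA (fun a0 => sa_law nS nA P pi (m b) t s0 a0 * P s0 a0 s)))).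
  - rewrite fsum_swap, <- fsum_scal_r. apply fsum_ext. intros b _.
    rewrite fsum_scal. ring.
  - intros s0 Hs0. rewrite (fsum_ext nA _ (fun a0 => fsum n (fun b => c b *
      (sa_law nS nA P pi (m b) t s0 a0 * P s0 a0 s)))).
    + rewrite fsum_swap. apply fsum_ext. intros b _. rewrite fsum_scal. auto.
    + intros a0 Ha0. rewrite IHt by auto. rewrite <- fsum_scal_r. apply fsum_ext. intros; ring.
Qed.

Lemma exp_reward_lin nS nA P r pi n (c : nat -> R) (m : nat -> nat -> nat -> R) mu :
  (forall s a, (s < nS)%nat -> (a < nA)%nat -> mu s a = fsum n (fun b => c b * m b s a)) ->
  forall t, exp_reward nS nA P r pi mu t = fsum n (fun b => c b * exp_reward nS nA P r pi (m b) t).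
Proof. intros Hmu t. unfold exp_reward.
  rewrite (fsum_ext nS _ (fun s => fsum n (fun b => c b *
      fsum nA (fun a => sa_law nS nA P pi (m b) t s a * r s a)))).
  - rewrite fsum_swap. apply fsum_ext. intros b _. rewrite fsum_scal. auto.
  - intros s Hs. rewrite (fsum_ext nA _ (fun a => fsum n (fun b => c b *
      (sa_law nS nA P pi (m b) t s a * r s a)))).
    + rewrite fsum_swap. apply fsum_ext. intros b _. rewrite fsum_scal. auto.
    + intros a Ha. erewrite sa_law_lin by eauto. rewrite <- fsum_scal_r. apply fsum_ext. intros; ring.
Qed.

Lemma V_eq_sumQ nS nA P r gamma pi V Q s0 : is_V nS nA P r gamma pi V -> is_Q nS nA P r gamma pi Q ->
  (s0 < nS)%nat -> V s0 = fsum nA (fun b => pi s0 b * Q s0 b).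
Proof. intros HV HQ Hs0.
  assert (Hmu: forall s a, (s < nS)%nat -> (a < nA)%nat ->
     mu_state s0 pi s a = fsum nA (fun b => pi s0 b * mu_sa s0 b s a)).
  { intros s a Hs Ha. unfold mu_state, mu_sa. destruct (Nat.eqb_spec s s0).
    - subst. simpl. rewrite fsum_delta. destruct (Nat.ltb_spec a nA); try lia. auto.
    - simpl. transitivity (fsum nA (fun _ => 0)). symmetry; apply fsum_zero. apply fsum_ext; intros; ring. }
  apply (uniqueness_sum (fun t => gamma ^ t * exp_reward nS nA P r pi (mu_state s0 pi) t)).
  apply HV; auto.
  apply infsum_ext with (fun t => fsum nA (fun b => pi s0 b * (gamma ^ t * exp_reward nS nA P r pi (mu_sa s0 b) t))).
  - intros t. erewrite exp_reward_lin by eauto. rewrite <- fsum_scal. apply fsum_ext. intros; ring.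
  - apply infsum_fsum. intros b Hb. apply infsum_scal. apply HQ; auto.
Qed.

Lemma sa_law_nonneg nS nA P rho0 pi : is_mdp nS nA P rho0 -> is_policy nS nA pi ->
  forall t s a, (s < nS)%nat -> (a < nA)%nat -> 0 <= sa_law nS nA P pi (mu_start rho0 pi) t s a.
Proof. intros [_ [_ [HP [_ [Hr _]]]]] [Hp _] t. induction t; intros s a Hs Ha; simpl.
  - unfold mu_start. apply Rmult_le_pos. left; auto. auto.
  - apply Rmult_le_pos; auto. apply fsum_nonneg; intros. apply fsum_nonneg; intros.
    apply Rmult_le_pos; auto.
Qed.

Lemma sa_law_total nS nA P rho0 pi : is_mdp nS nA P rho0 -> is_policy nS nA pi ->
  forall t, fsum nS (fun s => fsum nA (fun a => sa_law nS nA P pi (mu_start rho0 pi) t s a)) = 1.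
Proof. intros [_ [_ [HP [HP1 [Hr Hr1]]]]] [Hp Hp1] t. induction t; simpl.
  - unfold mu_start. rewrite <- Hr1. apply fsum_ext. intros s Hs. rewrite fsum_scal, Hp1; auto. ring.
  - rewrite <- IHt.
    rewrite (fsum_ext nS _ (fun s => fsum nS (fun s0 => fsum nA (fun a0 =>
       sa_law nS nA P pi (mu_start rho0 pi) t s0 a0 * P s0 a0 s)))).
    + rewrite fsum_swap. apply fsum_ext. intros s0 Hs0. rewrite fsum_swap. apply fsum_ext. intros a0 Ha0.
      rewrite fsum_scal, HP1; auto. ring.
    + intros s Hs. rewrite fsum_scal, Hp1; auto. ring.
Qed.

Lemma rho_nonneg nS nA P rho0 gamma pi rho : is_mdp nS nA P rho0 -> is_policy nS nA pi -> 0 < gamma ->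
  is_visitation nS nA P rho0 gamma pi rho -> forall s, (s < nS)%nat -> 0 <= rho s.
Proof. intros Hm Hp Hg Hr s Hs. eapply infsum_nonneg; [|apply Hr; auto]. intros t.
  apply Rmult_le_pos. apply pow_le; lra. apply fsum_nonneg; intros. eapply sa_law_nonneg; eauto. Qed.

Lemma rho_total nS nA P rho0 gamma pi rho : is_mdp nS nA P rho0 -> is_policy nS nA pi -> 0 < gamma < 1 ->
  is_visitation nS nA P rho0 gamma pi rho -> fsum nS rho = / (1 - gamma).
Proof. intros Hm Hp Hg Hr.
  apply (uniqueness_sum (fun t => fsum nS (fun s => gamma ^ t *
       fsum nA (fun a => sa_law nS nA P pi (mu_start rho0 pi) t s a)))).
  - apply infsum_fsum. intros; apply Hr; auto.
  - apply infsum_ext with (fun n => 1 * gamma ^ n).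
    + intros t. rewrite fsum_scal, (sa_law_total _ _ _ _ _ Hm Hp). ring.
    + apply GP_infinite. rewrite Rabs_right; lra.
Qed.

Theorem mainTheorem2
  (nS nA : nat) (P : nat -> nat -> nat -> R) (r : nat -> nat -> R)
  (rho0 : nat -> R) (gamma : R)
  (Hmdp : is_mdp nS nA P rho0) (Hgamma : 0 < gamma < 1)
  (pi : nat -> nat -> R) (Hpi : is_policy nS nA pi)
  (eta : R) (rho V : nat -> R) (Q : nat -> nat -> R)
  (Heta : is_eta nS nA P r rho0 gamma pi eta)
  (Hrho : is_visitation nS nA P rho0 gamma pi rho)
  (HV : is_V nS nA P r gamma pi V)
  (HQ : is_Q nS nA P r gamma pi Q)
  (Astar : R)
  (HAstar :
     (exists pi', is_policy nS nA pi' /\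
        pol_adv nS nA rho (fun s a => Q s a - V s) pi' = Astar) /\
     (forall pi', is_policy nS nA pi' ->
        pol_adv nS nA rho (fun s a => Q s a - V s) pi' <= Astar))
  (delta : R) (Hdelta : 0 < delta)
  (pit : nat -> nat -> R)
  (Hpit_pol : is_policy nS nA pit)
  (Hpit_feas : exp_dtv nS nA rho pi pit <= delta)
  (Hpit_opt : forall pi', is_policy nS nA pi' -> exp_dtv nS nA rho pi pi' <= delta ->
      surrogate nS nA eta rho (fun s a => Q s a - V s) pi'
      <= surrogate nS nA eta rho (fun s a => Q s a - V s) pit) :
  surrogate nS nA eta rho (fun s a => Q s a - V s) pit
  - surrogate nS nA eta rho (fun s a => Q s a - V s) pi
  >= Rmin 1 ((1 - gamma) * delta) * Astar.
Proof.
  destruct HAstar as [[ps [Hps Hpsv]] _].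
  set (al := Rmin 1 ((1 - gamma) * delta)).
  assert (Hal0 : 0 < al) by (apply Rmin_glb_lt; [lra | apply Rmult_lt_0_compat; lra]).
  assert (Hal1 : al <= 1) by apply Rmin_l.
  assert (Hal2 : al <= (1 - gamma) * delta) by apply Rmin_r.
  set (A := fun s a => Q s a - V s).
  set (pim := fun s a => (1 - al) * pi s a + al * ps s a).
  destruct Hpi as [Hpi0 Hpi1]. destruct Hps as [Hps0 Hps1].
  assert (Hrho0 := rho_nonneg _ _ _ _ _ _ _ Hmdp (conj Hpi0 Hpi1) (proj1 Hgamma) Hrho).
  assert (Hrhot := rho_total _ _ _ _ _ _ _ Hmdp (conj Hpi0 Hpi1) Hgamma Hrho).
  assert (Hpol : is_policy nS nA pim).
  { split.
    - intros s a Hs Ha. unfold pim. pose proof (Hpi0 s a Hs Ha). pose proof (Hps0 s a Hs Ha).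
      apply Rplus_le_le_0_compat; apply Rmult_le_pos; lra.
    - intros s Hs. unfold pim. rewrite fsum_plus, !fsum_scal, Hpi1, Hps1 by auto. ring. }
  assert (Hzero : forall s, (s < nS)%nat -> fsum nA (fun a => pi s a * A s a) = 0).
  { intros s Hs. unfold A.
    rewrite (fsum_ext nA _ (fun a => pi s a * Q s a - V s * pi s a)) by (intros; ring).
    rewrite fsum_minus, fsum_scal, Hpi1 by auto.
    rewrite <- (V_eq_sumQ _ _ _ _ _ _ _ _ s HV HQ Hs). ring. }
  assert (Hsurpi : surrogate nS nA eta rho A pi = eta).
  { unfold surrogate. rewrite (fsum_ext nS _ (fun _ => 0)). rewrite fsum_zero; ring.
    intros s Hs. rewrite Hzero; auto; ring. }
  assert (Hsurpim : surrogate nS nA eta rho A pim = eta + al * Astar).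
  { unfold surrogate. rewrite <- Hpsv. unfold pol_adv. fold A.
    rewrite <- fsum_scal. f_equal. apply fsum_ext. intros s Hs.
    unfold pim.
    rewrite (fsum_ext nA _ (fun a => (1 - al) * (pi s a * A s a) + al * (ps s a * A s a))) by (intros; ring).
    rewrite fsum_plus, !fsum_scal, Hzero by auto. unfold A. ring. }
  assert (Hfeas : exp_dtv nS nA rho pi pim <= delta).
  { apply Rle_trans with (fsum nS (fun s => rho s * al)).
    - apply fsum_le. intros s Hs. apply Rmult_le_compat_l; auto.
      unfold dtv, pim.
      apply Rle_trans with (/ 2 * fsum nA (fun a => al * (pi s a + ps s a))).
      + apply Rmult_le_compat_l. lra. apply fsum_le. intros a Ha.
        replace (pi s a - ((1 - al) * pi s a + al * ps s a)) with (al * (pi s a - ps s a)) by ring.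
        rewrite Rabs_mult, (Rabs_right al) by lra. apply Rmult_le_compat_l. lra.
        pose proof (Hpi0 s a Hs Ha). pose proof (Hps0 s a Hs Ha).
        unfold Rabs; destruct (Rcase_abs _); lra.
      + rewrite fsum_scal, fsum_plus, Hpi1, Hps1 by auto. lra.
    - rewrite fsum_scal_r, Hrhot.
      apply Rle_trans with ((1 - gamma) * delta * / (1 - gamma)).
      rewrite Rmult_comm. apply Rmult_le_compat_r; auto. left; apply Rinv_0_lt_compat; lra.
      right. field. lra. }
  pose proof (Hpit_opt pim Hpol Hfeas). fold A in H |- *. fold al. lra.
Qed.
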